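(* Let $m \le n$ and $1 \le k \le m$. Let $X$ be a normal operator on $\mathcal{H}_n \otimes \mathcal{H}_m$ with spectral decomposition $X = \sum_i \lambda_i |v_i\rangle\langle v_i|$, where $\{|v_i\rangle\}$ is an orthonormal basis of eigenvectors and $\lambda_i$ are the corresponding eigenvalues. Then \[ \|X\|_{S(k)} \le \sum_i |\lambda_i|\, \big\||v_i\rangle\big\|_{s(k)}^2. \]
   Context: $\mathcal{H}_d = \mathbb{C}^d$ and $m\le n$. $SR$ denotes Schmidt rank, i.e. the number of nonzero singular values of the coefficient matrix of a vector in $\mathcal{H}_n\otimes\mathcal{H}_m$. $\big\||v\rangle\big\|_{s(k)} := \sup\{|\langle w|v\rangle| : |w\rangle \text{ unit}, SR(|w\rangle)\le k\}$. By a known result this equals the square root of the sum of squares of the $k$ largest Schmidt coefficients of $|v\rangle$. $\|X\|_{S(k)} := \sup\{|\langle w|X|v\rangle| : |v\rangle,|w\rangle \text{ unit}, SR(|v\rangle),SR(|w\rangle)\le k\}$. *)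

(* Defs.v *)
From HB Require Import structures.
From mathcomp Require Import all_boot all_order all_algebra.
From mathcomp Require Import complex.
From mathcomp Require Import boolp classical_sets reals.
Set Implicit Arguments. Unset Strict Implicit. Unset Printing Implicit Defensive.
Import Order.TTheory GRing.Theory Num.Theory.
Local Open Scope ring_scope.
Local Open Scope classical_set_scope.

Section QDefs.
Variable R : realType.
Local Notation C := R[i].

Definition adjmx (p q : nat) (A : 'M[C]_(p, q)) : 'M[C]_(q, p) :=
  (map_mx (@conjc R) A)^T.

Definition inprod (d : nat) (w v : 'cV[C]_d) : C := (adjmx w *m v) ord0 ord0.

Definition is_unit_vec (d : nat) (v : 'cV[C]_d) : Prop := inprod v v = 1.

(* A vector of H_n (x) H_m = C^(n*m) (standard Kronecker ordering, index
   (i,j) |-> i*m + j) and its n x m coefficient matrix. *)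
Definition coefmx (n m : nat) (v : 'cV[C]_(n * m)) : 'M[C]_(n, m) := vec_mx v^T.
Arguments coefmx : clear implicits.

(* Schmidt rank: number of nonzero singular values = rank of coefficient matrix *)
Definition schmidt_rank (n m : nat) (v : 'cV[C]_(n * m)) : nat := \rank (coefmx n m v).
Arguments schmidt_rank : clear implicits.

Definition snorm_k (n m k : nat) (v : 'cV[C]_(n * m)) : R :=
  sup [set r : R | exists w : 'cV[C]_(n * m),
        [/\ is_unit_vec w, (schmidt_rank n m w <= k)%N & r = Normc.normc (inprod w v)]].

Definition Snorm_k (n m k : nat) (X : 'M[C]_(n * m)) : R :=
  sup [set r : R | exists v w : 'cV[C]_(n * m),
        [/\ is_unit_vec v, is_unit_vec w, (schmidt_rank n m v <= k)%N,
            (schmidt_rank n m w <= k)%N & r = Normc.normc (inprod w (X *m v))]].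

Definition normal_op (d : nat) (X : 'M[C]_d) : Prop := X *m adjmx X = adjmx X *m X.

Definition orthonormal_basis (d : nat) (V : 'I_d -> 'cV[C]_d) : Prop :=
  forall i j, inprod (V i) (V j) = (i == j)%:R.

End QDefs.
Arguments snorm_k {R} n m k v.
Arguments Snorm_k {R} n m k X.
Arguments schmidt_rank {R} n m v.
Arguments coefmx {R} n m v.

(* Main.v *)
Require Import Defs.
From HB Require Import structures.
From mathcomp Require Import all_boot all_order all_algebra.
From mathcomp Require Import complex.
From mathcomp Require Import boolp classical_sets reals.
Import Order.TTheory GRing.Theory Num.Theory.
Local Open Scope ring_scope.

Section Aux.
Variable R : realType.
Local Notation C := R[i].
Local Notation nc := (@Normc.normc R).

Lemma nc_ge0 (z : C) : 0 <= nc z.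
Proof. by case: z => a b; rewrite /Normc.normc sqrtr_ge0. Qed.

Lemma nc_conj (z : C) : nc (z^*)%C = nc z.
Proof. by case: z => a b; rewrite /Normc.normc /= sqrrN. Qed.

Lemma nc_sum (I : Type) (r : seq I) (F : I -> C) :
  nc (\sum_(i <- r) F i) <= \sum_(i <- r) nc (F i).
Proof.
elim: r => [|a r IH]; first by rewrite !big_nil Normc.normc0.
rewrite !big_cons; apply: le_trans (le_normcD _ _) _.
by rewrite lerD2l.
Qed.

Lemma inprodE (d : nat) (w v : 'cV[C]_d) :
  inprod w v = \sum_j ((w j ord0)^*)%C * v j ord0.
Proof. by rewrite /inprod mxE; apply: eq_bigr => j _; rewrite /adjmx !mxE. Qed.

Lemma inprod_conj (d : nat) (w v : 'cV[C]_d) :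
  inprod v w = ((inprod w v)^*)%C.
Proof.
rewrite !inprodE rmorph_sum; apply: eq_bigr => j _.
by rewrite rmorphM /= conjcK mulrC.
Qed.

Lemma nc_normr (z : C) : `|z| = (nc z)%:C%C.
Proof. by case: z. Qed.

Lemma unit_coord (d : nat) (w : 'cV[C]_d) j :
  is_unit_vec w -> nc (w j ord0) <= 1.
Proof.
move=> H.
have E : \sum_i `|w i ord0| ^+ 2 = 1.
  by rewrite -H inprodE; apply: eq_bigr => i _; rewrite sqr_normc mulrC.
have : `|w j ord0| ^+ 2 <= 1.
  rewrite -E (bigD1 j) //= lerDl sumr_ge0 // => i _.
  exact: exprn_ge0.
rewrite expr_le1 // nc_normr -(@lecR R _ 1) //.
Qed.

Lemma inprod_bound (d : nat) (w v : 'cV[C]_d) :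
  is_unit_vec w -> nc (inprod w v) <= \sum_j nc (v j ord0).
Proof.
move=> H; rewrite inprodE; apply: le_trans (nc_sum _ _ _) _.
apply: ler_sum => j _; rewrite Normc.normcM nc_conj.
by apply: ler_piMl; [exact: nc_ge0 | exact: unit_coord].
Qed.

Lemma snorm_ub (n m k : nat) (v w : 'cV[C]_(n * m)) :
  is_unit_vec w -> (schmidt_rank n m w <= k)%N ->
  nc (inprod w v) <= snorm_k n m k v.
Proof.
move=> Hw Hk; apply: ub_le_sup; last by exists w.
exists (\sum_j nc (v j ord0)) => r [w' [Hw' _ ->]].
exact: inprod_bound.
Qed.

Lemma snorm_ge0 (n m k : nat) (v : 'cV[C]_(n * m)) (w : 'cV[C]_(n * m)) :
  is_unit_vec w -> (schmidt_rank n m w <= k)%N -> 0 <= snorm_k n m k v.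
Proof. by move=> Hw Hk; exact: le_trans (nc_ge0 _) (snorm_ub _ _ _ v _ Hw Hk). Qed.

Lemma inprod_sumZ (d : nat) (w : 'cV[C]_d) (c : 'I_d -> C) (U : 'I_d -> 'cV[C]_d) :
  inprod w (\sum_i c i *: U i) = \sum_i c i * inprod w (U i).
Proof.
rewrite /inprod mulmx_sumr summxE; apply: eq_bigr => i _.
by rewrite -scalemxAr mxE.
Qed.

Lemma expandX (d : nat) (lam : 'I_d -> C) (V : 'I_d -> 'cV[C]_d) (w v : 'cV[C]_d) :
  inprod w ((\sum_i lam i *: (V i *m adjmx (V i))) *m v)
  = \sum_i lam i * inprod (V i) v * inprod w (V i).
Proof.
have -> : (\sum_i lam i *: (V i *m adjmx (V i))) *m v
          = \sum_i (lam i * inprod (V i) v) *: V i.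
  rewrite mulmx_suml; apply: eq_bigr => i _.
  rewrite -scalemxAl -mulmxA.
  have -> : adjmx (V i) *m v = (inprod (V i) v)%:M.
    apply/matrixP => a b; rewrite !ord1 !mxE /=.
by rewrite mulr1n /inprod mxE.

  by rewrite mul_mx_scalar scalerA.
by rewrite inprod_sumZ.
Qed.

End Aux.

Theorem proposition4p11 (R : realType) (n m k : nat)
  (X : 'M[R[i]]_(n * m)) (V : 'I_(n * m) -> 'cV[R[i]]_(n * m))
  (lam : 'I_(n * m) -> R[i]) :
  (m <= n)%N -> (1 <= k)%N -> (k <= m)%N ->
  normal_op X ->
  orthonormal_basis V ->
  (forall i, X *m V i = lam i *: V i) ->
  X = \sum_(i < n * m) lam i *: (V i *m adjmx (V i)) ->
  Snorm_k n m k X <= \sum_(i < n * m) Normc.normc (lam i) * snorm_k n m k (V i) ^+ 2.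
Proof.
move=> _ _ _ _ _ _ HX.
rewrite /Snorm_k.
have rhs0 : 0 <= \sum_(i < n * m) Normc.normc (lam i) * snorm_k n m k (V i) ^+ 2.
  apply: sumr_ge0 => i _; apply: mulr_ge0; [exact: nc_ge0 | exact: sqr_ge0].
set S := (Y in sup Y).
case: (pselect (exists x, S x)) => [ne|e]; last by rewrite sup_out //; case.
apply: ge_sup => // r [v [w [Hv Hw Hkv Hkw ->]]].
rewrite HX expandX.
apply: le_trans (nc_sum _ _ _ _) _.
apply: ler_sum => i _.
rewrite !Normc.normcM expr2 -mulrA.
apply: ler_wpM2l; first exact: nc_ge0.
rewrite [inprod (V i) v]inprod_conj nc_conj.
apply: ler_pM; [exact: nc_ge0 | exact: nc_ge0 | exact: (@snorm_ub R n m k (V i) v Hv Hkv) | exact: (@snorm_ub R n m k (V i) w Hw Hkw)].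
Qed.
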